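(* (a) Fix an input distribution $p\in\Delta_m$ and define, for $P$ in the set $\Delta_{n\times m}$ of $n\times m$ nonnegative matrices with entries summing to $1$, $$I_c(P)=\sum_{j=1}^m\sum_{i=1}^nP_{ij}\log\Big(\frac{P_{ij}}{\sum_{k=1}^m p_jP_{ik}}\Big).$$ Then $I_c$ is $1$-smooth relative to the negative Shannon entropy $-H$ on $\Delta_{n\times m}$. (b) Fix an input state $\rho_A\in\mathcal{D}(\mathcal{H}_A)$ and define, for $\rho_{BR}\in\mathcal{D}(\mathcal{H}_B\otimes\mathcal{H}_R)$, $$I_q(\rho_{BR})=S(\rho_A)+S(\operatorname{tr}_R(\rho_{BR}))-S(\rho_{BR}).$$ Then $I_q$ is $1$-smooth relative to the negative von Neumann entropy $-S$ on $\mathcal{D}(\mathcal{H}_B\otimes\mathcal{H}_R)$.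
   Context: $H(x)=-\sum_i x_i\log x_i$ (applied entrywise to matrices); $S(\rho)=-\operatorname{tr}[\rho\log\rho]$; $\mathcal{D}(\cdot)$ denotes density matrices and $\operatorname{tr}_R$ the partial trace over $\mathcal{H}_R$. A function $f$ is $L$-smooth relative to a Legendre function $\varphi$ on a convex set $\mathcal{C}$ if $L\varphi-f$ is convex on the relative interior of $\mathcal{C}$. *)

(* Defs.v *)
From HB Require Import structures.
From mathcomp Require Import all_boot all_order all_algebra.
From mathcomp Require Import classical_sets reals exp.
From mathcomp Require Import complex mxtens.
Set Implicit Arguments. Unset Strict Implicit. Unset Printing Implicit Defensive.
Import Order.TTheory GRing.Theory Num.Theory Num.Def.
Local Open Scope ring_scope.
Local Open Scope classical_set_scope.

(* V is a vector space over K; real scalars act through emb : R -> K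
   (emb = id for real spaces, emb = (fun t => t%:C) for complex spaces). *)

Definition convex_on (R : realType) (K : pzRingType) (V : lmodType K)
    (emb : R -> K) (S : set V) (g : V -> R) : Prop :=
  forall x y, S x -> S y -> forall t : R, 0 <= t -> t <= 1 ->
    g (emb t *: x + emb (1 - t) *: y) <= t * g x + (1 - t) * g y.

(* relative interior of a convex set C (Rockafellar, Thm 6.4):
   x in C such that every segment [y, x] in C can be prolonged beyond x in C *)
Definition relint (R : realType) (K : pzRingType) (V : lmodType K)
    (emb : R -> K) (C : set V) : set V :=
  [set x | C x /\ forall y, C y -> exists2 e : R, 0 < e & C (x + emb e *: (x - y))].

Definition rel_smooth (R : realType) (K : pzRingType) (V : lmodType K)
    (emb : R -> K) (L : R) (phi f : V -> R) (C : set V) : Prop :=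
  convex_on emb (relint emb C) (fun x => L * phi x - f x).

Definition prob_vec (R : realType) (m : nat) : set 'rV[R]_m :=
  [set p | (forall j, 0 <= p ord0 j) /\ \sum_(j < m) p ord0 j = 1].

Definition prob_mx (R : realType) (n m : nat) : set 'M[R]_(n, m) :=
  [set P | (forall i j, 0 <= P i j) /\ \sum_(i < n) \sum_(j < m) P i j = 1].

Definition shannonH (R : realType) (n m : nat) (P : 'M[R]_(n, m)) : R :=
  - \sum_(i < n) \sum_(j < m) P i j * ln (P i j).

Definition Ic (R : realType) (n m : nat) (p : 'rV[R]_m) (P : 'M[R]_(n, m)) : R :=
  \sum_(j < m) \sum_(i < n)
     P i j * ln (P i j / \sum_(k < m) p ord0 j * P i k).

Local Open Scope complex_scope.

Definition cplx (R : realType) (t : R) : R[i] := t%:C.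

Definition density (R : realType) (N : nat) : set 'M[R[i]]_N :=
  [set rho | (map_mx conjC rho)^T = rho
           /\ (forall v : 'rV[R[i]]_N, 0 <= (v *m rho *m (map_mx conjC v)^T) ord0 ord0)
           /\ \tr rho = 1].

(* matrix logarithm via the spectral decomposition rho = U^-1 diag(l) U
   (log applied to the (real) eigenvalues; convention log 0 = 0 of ln) *)
Definition mxlog (R : realType) (N : nat) (rho : 'M[R[i]]_N) : 'M[R[i]]_N :=
  invmx (spectralmx rho)
    *m diag_mx (\row_j ((ln (complex.Re (spectral_diag rho ord0 j)))%:C))
    *m spectralmx rho.

Definition vnS (R : realType) (N : nat) (rho : 'M[R[i]]_N) : R :=
  - complex.Re (\tr (rho *m mxlog rho)).

(* partial trace over H_R of an operator on H_B (x) H_R; the index of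
   H_B (x) H_R is encoded by mxtens_index (same convention as tensmx) *)
Definition ptraceR (R : realType) (b r : nat) (rho : 'M[R[i]]_(b * r)) : 'M[R[i]]_b :=
  \matrix_(i, i') \sum_(k < r) rho (mxtens_index (i, k)) (mxtens_index (i', k)).

Definition Iq (R : realType) (a b r : nat) (rhoA : 'M[R[i]]_a)
    (rho : 'M[R[i]]_(b * r)) : R :=
  vnS rhoA + vnS (ptraceR rho) - vnS rho.

(* Main.v *)
Require Import Defs.
From HB Require Import structures.
From mathcomp Require Import all_boot all_order all_algebra.
From mathcomp Require Import classical_sets reals exp.
From mathcomp Require Import complex mxtens.
From mathcomp Require Import ring lra.
Import Order.TTheory GRing.Theory Num.Theory Num.Def.
Local Open Scope ring_scope.
Local Open Scope sesquilinear_scope.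

Section S.
Variable R : realType.


Definition Phi (a b : R) := a * ln (a / b).

Lemma ge0_cases {x : R} : 0 <= x -> x = 0 \/ 0 < x.
Proof. by rewrite le_eqVlt => /orP [/eqP <-|]; [left|right]. Qed.

Lemma logsum (I : finType) (a b : I -> R) :
  (forall i, 0 <= a i) -> (forall i, 0 <= b i) -> (forall i, b i = 0 -> a i = 0) ->
  (\sum_i a i) * ln ((\sum_i a i) / (\sum_i b i)) <= \sum_i a i * ln (a i / b i).
Proof.
move=> a0 b0 ba.
set A := \sum_i a i; set B := \sum_i b i.
have B0 : 0 <= B by apply: sumr_ge0.
have A0 : 0 <= A by apply: sumr_ge0.
have [BE|Bpos] := ge0_cases B0.
  have bz : forall i, b i = 0 by move=> i; apply: (psumr_eq0P (fun i _ => b0 i) BE).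
  have az : forall i, a i = 0 by move=> i; apply: ba.
  have -> : A = 0 by rewrite /A big1.
  by rewrite mul0r big1 // => i _; rewrite az mul0r.
have key : forall i, a i - b i * (A / B) <= a i * ln (a i / b i) - a i * ln (A / B).
  move=> i.
  have [ai0|aipos] := ge0_cases (a0 i).
    rewrite ai0 !mul0r subrr sub0r oppr_le0; apply: mulr_ge0 => //.
    by apply: divr_ge0.
  have bipos : 0 < b i.
    have [bE|//] := ge0_cases (b0 i).
    by move: aipos; rewrite (ba i bE) ltxx.
  have aA : a i <= A by rewrite /A (bigD1 i) //= lerDl sumr_ge0.
  have Apos : 0 < A by apply: lt_le_trans aA.
  set K := A / B.
  have Kpos : 0 < K by apply: divr_gt0.
  clearbody K.
  set w := K * b i / a i.
  have wpos : 0 < w by apply: divr_gt0 => //; apply: mulr_gt0.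
  have lnw : ln w <= w - 1.
    have := @le_ln1Dx R (w - 1).
    have -> : 1 + (w - 1) = w by ring.
    apply; lra.
  have e : ln (a i / b i) - ln K = - ln w.
    rewrite /w !ln_div ?lnM ?posrE ?mulr_gt0 //; ring.
  have aw : a i * w = K * b i.
    by rewrite /w mulrC divfK // gt_eqF.
  rewrite -(mulrBr (a i)) e.
  have := ler_wpM2l (ltW aipos) lnw.
  rewrite mulrBr aw mulr1 => h.
  rewrite mulrN; lra.
have := ler_sum (index_enum I) (fun i (_ : true) => key i).
rewrite !sumrB -!mulr_suml -/A -/B.
have -> : B * (A / B) = A by rewrite mulrC divfK // gt_eqF.
by rewrite subrr subr_ge0.
Qed.

Lemma scal_Phi (s x y : R) : 0 <= s -> 0 < y ->
  (s * x) * ln ((s * x) / (s * y)) = s * (x * ln (x / y)).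
Proof.
move=> s0 y0.
have [->|spos] := ge0_cases s0.
  by rewrite !mul0r.
by rewrite invfM mulrACA divff ?gt_eqF // mul1r mulrA.
Qed.

Lemma Phi_cvx (a a' b b' t : R) : 0 <= a -> 0 <= a' -> 0 < b -> 0 < b' ->
  0 <= t -> t <= 1 ->
  Phi (t * a + (1 - t) * a') (t * b + (1 - t) * b')
    <= t * Phi a b + (1 - t) * Phi a' b'.
Proof.
move=> a0 a'0 b0 b'0 t0 t1.
have t'0 : 0 <= 1 - t by rewrite subr_ge0.
have := @logsum bool (fun x => if x then t * a else (1 - t) * a')
                     (fun x => if x then t * b else (1 - t) * b').
rewrite !big_bool /= /Phi.
rewrite -(@scal_Phi t a b t0 b0) -(@scal_Phi (1 - t) a' b' t'0 b'0).
apply.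
- by case; apply: mulr_ge0.
- by case; apply: mulr_ge0 => //; apply: ltW.
- case => /eqP; rewrite mulf_eq0 => /orP [/eqP ->|/eqP bE]; rewrite ?mul0r //.
    by move: b0; rewrite bE ltxx.
  by move: b'0; rewrite bE ltxx.
Qed.


Definition rs {n m} (P : 'M[R]_(n, m)) i := \sum_(k < m) P i k.
Definition V (a r c : R) := if 0 < c then a * ln c else Phi a r.

Lemma rs_ge {n m} (P : 'M[R]_(n, m)) i j : (forall i j, 0 <= P i j) -> P i j <= rs P i.
Proof. by move=> h; rewrite /rs (bigD1 j) //= lerDl sumr_ge0. Qed.

Lemma g_formula n m (p : 'rV[R]_m) (P : 'M[R]_(n, m)) :
  prob_vec p -> (forall i j, 0 < P i j) ->
  1 * - shannonH P - Ic p P =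
  \sum_i (\sum_j V (P i j) (rs P i) (p ord0 j) + Phi (rs P i) 1).
Proof.
move=> [p0 _] Ppos.
rewrite /shannonH /Ic opprK mul1r [X in _ - X]exchange_big /= -sumrB.
apply: eq_bigr => i _.
rewrite /Phi divr1 /rs mulr_suml -sumrB -big_split /=.
apply: eq_bigr => j _.
have rpos : 0 < rs P i.
  exact: lt_le_trans (Ppos i j) (rs_ge P i j (fun i' j' => ltW (Ppos i' j'))).
rewrite -mulr_sumr -/(rs P i) /V.
have Pp := Ppos i j.
case: ifP => cpos.
  rewrite ln_div ?lnM ?posrE ?mulr_gt0 //; ring.
have c0 : p ord0 j = 0.
  by have [//|h] := ge0_cases (p0 j); rewrite h in cpos.
rewrite c0 mul0r invr0 mulr0 (@ln0 _ 0) // /Phi ln_div ?posrE //; ring.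
Qed.

Lemma relint_pos n m (x : 'M[R]_(n, m)) :
  relint (fun t : R => t) (@prob_mx R n m) x -> forall i j, 0 < x i j.
Proof.
move=> [_ h] i0 j0.
have Cy : prob_mx (delta_mx i0 j0 : 'M[R]_(n, m)).
  split.
    by move=> i j; rewrite mxE.
  rewrite (bigD1 i0) //= [X in _ + X]big1 => [|i ni]; last first.
    by apply: big1 => j _; rewrite mxE (negbTE ni).
  rewrite addr0 (bigD1 j0) //= [X in _ + X]big1 => [|j nj]; last first.
    by rewrite mxE (negbTE nj) andbF.
  by rewrite mxE !eqxx addr0.
have [e epos [hC _]] := h _ Cy.
have := hC i0 j0; rewrite !mxE !eqxx /= => hh.
nra.
Qed.

Lemma partA n m (p : 'rV[R]_m) : prob_vec p ->
  rel_smooth (fun t : R => t) 1 (fun P : 'M[R]_(n, m) => - shannonH P)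
    (Ic p) (@prob_mx R n m).
Proof.
move=> hp x y hx hy t t0 t1.
have px := relint_pos _ _ _ hx; have py := relint_pos _ _ _ hy.
have zE : forall i j, (t *: x + (1 - t) *: y) i j = t * x i j + (1 - t) * y i j.
  by move=> i j; rewrite !mxE.
have pz : forall i j, 0 < (t *: x + (1 - t) *: y) i j.
  move=> i j; rewrite zE; have := px i j; have := py i j; nra.
have rsE : forall i, rs (t *: x + (1 - t) *: y) i = t * rs x i + (1 - t) * rs y i.
  by move=> i; rewrite /rs !mulr_sumr -big_split; apply: eq_bigr => j _; rewrite zE.
have rpos : forall (P : 'M[R]_(n, m)) (i : 'I_n) (j : 'I_m), (forall i j, 0 < P i j) -> 0 < rs P i.
  by move=> P i j hP; exact: lt_le_trans (hP i j) (rs_ge P i j (fun i' j' => ltW (hP i' j'))).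
rewrite !g_formula //.
rewrite !mulr_sumr -big_split /=; apply: ler_sum => i _.
rewrite !mulrDr addrACA; apply: lerD.
  rewrite !mulr_sumr -big_split /=; apply: ler_sum => j _.
  rewrite zE rsE /V; case: ifP => _.
    by rewrite le_eqVlt; apply/orP; left; apply/eqP; ring.
  apply: Phi_cvx => //; try exact: ltW; exact: (rpos _ i j).
rewrite rsE.
have rs0 : forall (P : 'M[R]_(n, m)), (forall i j, 0 < P i j) -> 0 <= rs P i.
  by move=> P hP; apply: sumr_ge0 => j _; apply: ltW.
have := @Phi_cvx (rs x i) (rs y i) 1 1 t (rs0 _ px) (rs0 _ py) ltr01 ltr01 t0 t1.
by have -> : t * 1 + (1 - t) * 1 = 1 by ring.
Qed.

Local Notation C := (R[i]).

Definition ct {N M} (A : 'M[C]_(N, M)) : 'M[C]_(M, N) := (map_mx conjC A)^T.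
Definition psd {N} (A : 'M[C]_N) := forall v : 'rV[C]_N, 0 <= (v *m A *m ct v) ord0 ord0.
Definition fl (x : R) := x * ln x.

Lemma ctE {N M} (A : 'M[C]_(N, M)) : ct A = A ^t*.
Proof. by rewrite /ct map_trmx. Qed.

Lemma ctK {N M} (A : 'M[C]_(N, M)) : ct (ct A) = A.
Proof. by rewrite !ctE trmxCK. Qed.

Lemma ct_mul {N M P} (A : 'M[C]_(N, M)) (B : 'M[C]_(M, P)) : ct (A *m B) = ct B *m ct A.
Proof. by rewrite /ct map_mxM trmx_mul. Qed.

Lemma ReD (x y : C) : complex.Re (x + y) = complex.Re x + complex.Re y.
Proof. by case: x; case: y. Qed.

Lemma Re_sum (I : finType) (F : I -> C) : complex.Re (\sum_i F i) = \sum_i complex.Re (F i).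
Proof. exact: (big_morph _ ReD). Qed.

Lemma ge0_C (z : C) : 0 <= z -> complex.Im z = 0 /\ 0 <= complex.Re z.
Proof. by rewrite lecE => /andP [/eqP -> ->]. Qed.

Lemma psd_diag {N} (A : 'M[C]_N) : psd A -> forall (M : 'M[C]_N) k,
  0 <= (M *m A *m ct M) k k.
Proof.
move=> h M k; have := h (row k M).
have -> : (row k M *m A *m ct (row k M)) ord0 ord0 = (M *m A *m ct M) k k.
  rewrite !mxE; apply: eq_bigr => j _; rewrite !mxE; congr (_ * _).
  by apply: eq_bigr => l _; rewrite !mxE.
by [].
Qed.

Lemma spec_facts {N} (A : 'M[C]_N) : ct A = A ->
  [/\ A = ct (spectralmx A) *m diag_mx (spectral_diag A) *m spectralmx A,
      spectralmx A *m ct (spectralmx A) = 1%:M &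
      ct (spectralmx A) *m spectralmx A = 1%:M].
Proof.
move=> hA.
have hU := spectral_unitarymx A.
have U1 : spectralmx A *m ct (spectralmx A) = 1%:M by rewrite ctE; apply/unitarymxP.
split => //; last exact: mulmx1C.
have hn : A \is normalmx.
  apply: hermitian_normalmx; apply/is_hermitianmxP.
  by rewrite expr0 scale1r -ctE hA.
by rewrite ctE -invmx_unitary //; apply/orthomx_spectralP.
Qed.

Lemma spec_diag {N} (A : 'M[C]_N) : ct A = A ->
  spectralmx A *m A *m ct (spectralmx A) = diag_mx (spectral_diag A).
Proof.
move=> hA; have [E U1 U2] := spec_facts A hA.
rewrite {2}E !mulmxA U1 mul1mx -mulmxA U1 mulmx1 //.
Qed.

Lemma Re_mulR (z : C) (c : R) : complex.Re (z * (c%:C)%C) = complex.Re z * c.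
Proof. by case: z => a b /=; ring. Qed.

Lemma tr_conj {N} (U D L : 'M[C]_N) : U \in unitmx ->
  \tr ((invmx U *m D *m U) *m (invmx U *m L *m U)) = \tr (D *m L).
Proof.
move=> Uu.
have -> : invmx U *m D *m U *m (invmx U *m L *m U) = invmx U *m (D *m L) *m U.
  by rewrite !mulmxA -(mulmxA _ U) (mulmxV Uu) mulmx1.
by rewrite mxtrace_mulC mulmxA (mulmxV Uu) mul1mx.
Qed.

Lemma vnS_formula {N} (A : 'M[C]_N) : ct A = A ->
  vnS A = - \sum_k fl (complex.Re (spectral_diag A ord0 k)).
Proof.
move=> hA; have [E U1 U2] := spec_facts A hA.
have E' : A = invmx (spectralmx A) *m diag_mx (spectral_diag A) *m spectralmx A.
  rewrite invmx_unitary; last exact: spectral_unitarymx.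
  by rewrite -ctE.
rewrite /vnS /mxlog [X in X *m _]E' tr_conj ?spectral_unit //.
move: (spectral_diag A) => d.
rewrite mul_diag_mx /mxtrace Re_sum; congr (- _); apply: eq_bigr => k _.
by rewrite !mxE eqxx mulr1n Re_mulR.
Qed.


Lemma jensen (I : finType) (B mu : I -> R) : (forall l, 0 <= B l) -> \sum_l B l = 1 ->
  (forall l, 0 <= mu l) -> fl (\sum_l B l * mu l) <= \sum_l B l * fl (mu l).
Proof.
move=> B0 B1 mu0.
have := @logsum I (fun l => B l * mu l) B (fun l => mulr_ge0 (B0 l) (mu0 l)) B0.
rewrite B1 divr1 /fl; move/(_ _)/le_trans; apply.
  by move=> l ->; rewrite mul0r.
rewrite le_eqVlt; apply/orP; left; apply/eqP; apply: eq_bigr => l _.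
have [->|Bp] := ge0_cases (B0 l); first by rewrite !mul0r.
by rewrite [B l * mu l]mulrC mulfK ?gt_eqF // mulrC -mulrA.
Qed.

Lemma Re_quad (z : C) (c : R) :
  complex.Re (z * (c%:C)%C * conjC z) = complex.Re (z * conjC z) * c.
Proof. case: z => a b /=; ring. Qed.

Lemma Re_quad_ge0 (z : C) : 0 <= complex.Re (z * conjC z).
Proof. case: z => a b /=; nra. Qed.


Lemma major {N} (A V : 'M[C]_N) : ct A = A -> psd A -> V *m ct V = 1%:M ->
  \sum_k fl (complex.Re ((V *m A *m ct V) k k))
    <= \sum_k fl (complex.Re (spectral_diag A ord0 k)).
Proof.
move=> hA pA V1; have [E U1 U2] := spec_facts A hA.
have dpos : forall l, 0 <= spectral_diag A ord0 l.
  move=> l; have := psd_diag A pA (spectralmx A) l.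
  by rewrite spec_diag // mxE eqxx mulr1n.
have W1 : (V *m ct (spectralmx A)) *m ct (V *m ct (spectralmx A)) = 1%:M.
  by rewrite ct_mul ctK !mulmxA -(mulmxA V) U2 mulmx1 V1.
have W2 := mulmx1C W1.
have VAV : V *m A *m ct V = (V *m ct (spectralmx A)) *m diag_mx (spectral_diag A)
     *m ct (V *m ct (spectralmx A)).
  by rewrite {1}E ct_mul ctK !mulmxA.
rewrite VAV.
move: (V *m ct (spectralmx A)) W1 W2 (spectral_diag A) dpos => W W1 W2 d dpos.
set mu := fun l => complex.Re (d ord0 l).
set B := fun k l => complex.Re (W k l * conjC (W k l)).
have dE : forall l, d ord0 l = ((mu l)%:C)%C.
  move=> l; have [hI _] := ge0_C _ (dpos l); rewrite /mu.
  by move: hI; case: (d ord0 l) => x y /= ->.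
have entry : forall k, complex.Re ((W *m diag_mx d *m ct W) k k) = \sum_l B k l * mu l.
  move=> k; rewrite mxE Re_sum; apply: eq_bigr => l _.
  by rewrite mul_mx_diag !mxE dE Re_quad mulrC.
have rows : forall k, \sum_l B k l = 1.
  move=> k; have := congr1 (fun M : 'M[C]_N => complex.Re (M k k)) W1.
  by rewrite /= !mxE eqxx mulr1n Re_sum /= => <-; apply: eq_bigr => l _; rewrite !mxE.
have cols : forall l, \sum_k B k l = 1.
  move=> l; have := congr1 (fun M : 'M[C]_N => complex.Re (M l l)) W2.
  by rewrite /= !mxE eqxx mulr1n Re_sum /= => <-; apply: eq_bigr => k _; rewrite !mxE mulrC.
have mu0 : forall l, 0 <= mu l by move=> l; have [_ ->] := ge0_C _ (dpos l).
under eq_bigr do rewrite entry.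
apply: le_trans (_ : \sum_k \sum_l B k l * fl (mu l) <= _).
  apply: ler_sum => k _; apply: jensen => // l; exact: Re_quad_ge0.
rewrite exchange_big /=; apply: ler_sum => l _.
by rewrite -mulr_suml cols mul1r.
Qed.


Lemma ct_mix {N M} (a b : R) (X Y : 'M[C]_(N, M)) :
  ct ((a%:C)%C *: X + (b%:C)%C *: Y) = (a%:C)%C *: ct X + (b%:C)%C *: ct Y.
Proof.
apply/matrixP => i j; rewrite !mxE rmorphD !rmorphM /=.
have cr : forall x : R, conjC ((x%:C)%C : C) = (x%:C)%C by move=> x; exact: conjc_real.
by rewrite !cr.
Qed.

Lemma qf_mix {N p q} (a b : R) (X Y : 'M[C]_N) (P : 'M[C]_(p, N)) (Q : 'M[C]_(N, q)) k l :
  (P *m ((a%:C)%C *: X + (b%:C)%C *: Y) *m Q) k l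
  = (a%:C)%C * (P *m X *m Q) k l + (b%:C)%C * (P *m Y *m Q) k l.
Proof.
by rewrite mulmxDr mulmxDl -!scalemxAr -!scalemxAl !mxE.
Qed.

Lemma Re_scal (c : R) (z : C) : complex.Re ((c%:C)%C * z) = c * complex.Re z.
Proof. by rewrite mulrC Re_mulR mulrC. Qed.

Lemma fl_cvx (a b t : R) : 0 <= a -> 0 <= b -> 0 <= t -> t <= 1 ->
  fl (t * a + (1 - t) * b) <= t * fl a + (1 - t) * fl b.
Proof.
move=> a0 b0 t0 t1.
have := @Phi_cvx a b 1 1 t a0 b0 ltr01 ltr01 t0 t1.
have -> : t * 1 + (1 - t) * 1 = 1 by ring.
by rewrite /Phi !divr1.
Qed.

Lemma vnS_concave {N} (X Y : 'M[C]_N) (t : R) :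
  ct X = X -> psd X -> ct Y = Y -> psd Y -> 0 <= t -> t <= 1 ->
  t * vnS X + (1 - t) * vnS Y <= vnS ((t%:C)%C *: X + ((1 - t)%:C)%C *: Y).
Proof.
move=> hX pX hY pY t0 t1.
have t'0 : 0 <= 1 - t by lra.
set M := (_ *: X + _ *: Y).
have hM : ct M = M by rewrite /M ct_mix hX hY.
have pM : psd M.
  move=> v; rewrite /M qf_mix.
  by apply: addr_ge0; apply: mulr_ge0; rewrite ?ler0c.
have [_ V1 _] := spec_facts M hM.
have dE : forall k, spectral_diag M ord0 k
    = (spectralmx M *m M *m ct (spectralmx M)) k k.
  by move=> k; rewrite spec_diag // mxE eqxx mulr1n.
rewrite (vnS_formula M hM) (vnS_formula X hX) (vnS_formula Y hY).
have hmX := major X (spectralmx M) hX pX V1.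
have hmY := major Y (spectralmx M) hY pY V1.
have step : \sum_k fl (complex.Re (spectral_diag M ord0 k)) <=
    t * \sum_k fl (complex.Re ((spectralmx M *m X *m ct (spectralmx M)) k k))
    + (1 - t) * \sum_k fl (complex.Re ((spectralmx M *m Y *m ct (spectralmx M)) k k)).
  rewrite !mulr_sumr -big_split /=; apply: ler_sum => k _.
  rewrite dE /M qf_mix ReD !Re_scal; apply: fl_cvx => //.
    by have [_ ->] := ge0_C _ (psd_diag X pX (spectralmx M) k).
  by have [_ ->] := ge0_C _ (psd_diag Y pY (spectralmx M) k).
have h1 := ler_wpM2l t0 hmX; have h2 := ler_wpM2l t'0 hmY.
rewrite !mulrN -opprD lerN2; apply: le_trans step _; exact: lerD.
Qed.


Lemma ptrace_mix {b r} (c d : C) (X Y : 'M[C]_(b * r)) :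
  ptraceR (c *: X + d *: Y) = c *: ptraceR X + d *: ptraceR Y.
Proof.
apply/matrixP => i j; rewrite !mxE !mulr_sumr -big_split /=.
by apply: eq_bigr => k _; rewrite !mxE.
Qed.

Lemma ptrace_herm {b r} (X : 'M[C]_(b * r)) : ct X = X -> ct (ptraceR X) = ptraceR X.
Proof.
move=> hX; apply/matrixP => i j.
rewrite /ct !mxE rmorph_sum; apply: eq_bigr => k _.
have := congr1 (fun M : 'M[C]_(b * r) => M (mxtens_index (i, k)) (mxtens_index (j, k))) hX.
by rewrite /= /ct !mxE.
Qed.

Lemma qexp {n} (u : 'rV[C]_n) (M : 'M[C]_n) :
  (u *m M *m ct u) ord0 ord0 = \sum_j \sum_i u ord0 i * M i j * conjC (u ord0 j).
Proof.
rewrite mxE; apply: eq_bigr => j _; rewrite !mxE mulr_suml.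
by apply: eq_bigr => i _.
Qed.

Lemma sum_tens {b r} (F : 'I_(b * r) -> C) :
  \sum_J F J = \sum_(i < b) \sum_(k < r) F (mxtens_index (i, k)).
Proof.
rewrite (reindex (@mxtens_index b r)) /=; last first.
  by exists (@mxtens_unindex b r) => p _; rewrite ?mxtens_indexK ?mxtens_unindexK.
by rewrite pair_big /=; apply: eq_bigr => [[i k]] _.
Qed.

Lemma sum_single {r} (F : 'I_r -> C) k : (forall k', k' != k -> F k' = 0) ->
  \sum_k' F k' = F k.
Proof. by move=> h; rewrite (bigD1 k) //= big1 ?addr0 // => k' /h. Qed.

Lemma ptrace_psd {b r} (X : 'M[C]_(b * r)) : psd X -> psd (ptraceR X).
Proof.
move=> pX v.
pose w k : 'rV[C]_(b * r) := \row_J (if (mxtens_unindex J).2 == k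
                                   then v ord0 (mxtens_unindex J).1 else 0).
have wE : forall k i k', w k ord0 (mxtens_index (i, k')) = if k' == k then v ord0 i else 0.
  by move=> k i k'; rewrite mxE mxtens_indexK.
have perk : forall k, (w k *m X *m ct (w k)) ord0 ord0 =
    \sum_i' \sum_i v ord0 i * X (mxtens_index (i, k)) (mxtens_index (i', k)) * conjC (v ord0 i').
  move=> k; rewrite qexp sum_tens; apply: eq_bigr => i' _.
  rewrite (@sum_single _ _ k); last first.
    by move=> k'' nk; apply: big1 => J _; rewrite wE (negbTE nk) rmorph0 mulr0.
  rewrite sum_tens; apply: eq_bigr => i _.
  rewrite (@sum_single _ _ k); last first.
    by move=> k' nk; rewrite wE (negbTE nk) !mul0r.
  by rewrite !wE eqxx.
have -> : (v *m ptraceR X *m ct v) ord0 ord0 = \sum_k (w k *m X *m ct (w k)) ord0 ord0.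
  under [RHS]eq_bigr do rewrite perk.
  rewrite qexp [RHS]exchange_big /=; apply: eq_bigr => i' _.
  rewrite [RHS]exchange_big /=; apply: eq_bigr => i _.
  by rewrite mxE mulr_sumr mulr_suml.
by apply: sumr_ge0 => k _; apply: pX.
Qed.

End S.

Lemma arith (R : realType) (t vA vz vx vy Sz Sx Sy : R) :
  t * Sx + (1 - t) * Sy <= Sz ->
  1 * - vz - (vA + Sz - vz) <= t * (1 * - vx - (vA + Sx - vx))
                               + (1 - t) * (1 * - vy - (vA + Sy - vy)).
Proof. move=> h; rewrite !mul1r; nra. Qed.

Theorem mainTheorem8 (R : realType) :
  (forall (n m : nat) (p : 'rV[R]_m), prob_vec p ->
     rel_smooth (fun t : R => t) 1 (fun P : 'M[R]_(n, m) => - shannonH P)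
       (Ic p) (@prob_mx R n m))
  /\
  (forall (a b r : nat) (rhoA : 'M[R[i]]_a), density rhoA ->
     rel_smooth (@cplx R) 1 (fun rho : 'M[R[i]]_(b * r) => - vnS rho)
       (Iq rhoA) (@density R (b * r))).
Proof.
split.
  by move=> n m p hp; apply: partA.
move=> a b r rhoA hA x y [[hx [px _]] _] [[hy [py _]] _] t t0 t1.
have hx' : ct R x = x := hx.
have hy' : ct R y = y := hy.
have px' : psd R x := px.
have py' : psd R y := py.
rewrite /Iq /cplx ptrace_mix.
have := vnS_concave R (ptraceR x) (ptraceR y) t (ptrace_herm R _ hx') (ptrace_psd R _ px')
   (ptrace_herm R _ hy') (ptrace_psd R _ py') t0 t1.
exact: arith.
Qed.
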